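(* Over Łukasiewicz logic Ł, the theory $T_Q$ proves: (1) every bookkeeping formula for $q$-variables valid in the standard MV-algebra, i.e. for all rationals $r,s\in[0,1]$ with chosen representations $r=m/n$, $s=k/l$, and $r*s=p/t$ (with $m\le n$, etc.), and each binary connective $*\in\{\cdot,\to,\oplus,\land,\lor,\equiv\}$, the formula $(q_{m/n} * q_{k/l})\equiv q_{p/t}$, where $r*s$ is computed in $[0,1]_{\text{Ł}}$, and likewise $\neg q_{m/n}\equiv q_{p/t}$ whenever $1-m/n=p/t$; (2) $q_{m/n}\equiv q_{m'/n'}$ whenever $m/n=m'/n'$; (3) $q_{m/n}\equiv\overline1$ whenever $m=n$.
   Context: Łukasiewicz logic Ł is the propositional logic in the connectives $\cdot,\to,\land,\lor,\neg,\oplus,\equiv,\overline0,\overline1$ with modus ponens; it is finitely strongly complete w.r.t. the standard MV-algebra $[0,1]_{\text{Ł}}$ (domain $[0,1]$, $x\cdot y=\max(0,x+y-1)$, $x\to y=\min(1,1-x+y)$, $\neg x=1-x$, $x\oplus y=\min(1,x+y)$, $\land=\min$, $\lor=\max$, $x\equiv y=1-|x-y|$). $x^k$ is the $k$-fold product, $kx$ the $k$-fold $\oplus$-sum. Let $Q=\{q_{m/n}\mid m,n\in\mathbb N,\ m\le n,\ n>0\}$ be propositional variables, one per pair $(m,n)$. The theory $T_Q$ has axioms: $q_{0/n}\equiv\overline0$ for $n>0$; $q_{1/1}\equiv\overline1$; $q_{1/n}\equiv(\neg q_{1/n})^{n-1}$ for $n\ge2$; $q_{m/n}\equiv m\,q_{1/n}$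 for $m\le n$, $n\ge2$. *)

(* Defs.v *)
From Stdlib Require Import Reals.
Open Scope R_scope.

(* Formulas: primitive connectives -> and 0bar; the variable [q m n]
   stands for q_{m/n} (only pairs with m <= n, n > 0 are ever used). *)
Inductive form : Type :=
| q : nat -> nat -> form
| bot : form
| imp : form -> form -> form.

Definition fneg (a : form) : form := imp a bot.
Definition ftop : form := fneg bot.
Definition fprod (a b : form) : form := fneg (imp a (fneg b)).
Definition fosum (a b : form) : form := imp (fneg a) b.
Definition fconj (a b : form) : form := fprod a (imp a b).
Definition fdisj (a b : form) : form :=
  fconj (imp (imp a b) b) (imp (imp b a) a).
Definition fequiv (a b : form) : form := fprod (imp a b) (imp b a).

Fixpoint fpow (a : form) (k : nat) : form :=
  match k with
  | O => ftop
  | S O => a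
  | S k' => fprod a (fpow a k')
  end.
Fixpoint fmul (k : nat) (a : form) : form :=
  match k with
  | O => bot
  | S O => a
  | S k' => fosum a (fmul k' a)
  end.

Inductive prov (T : form -> Prop) : form -> Prop :=
| p_ax : forall a, T a -> prov T a
| p_L1 : forall a b, prov T (imp a (imp b a))
| p_L2 : forall a b c, prov T (imp (imp a b) (imp (imp b c) (imp a c)))
| p_L3 : forall a b, prov T (imp (imp (fneg a) (fneg b)) (imp b a))
| p_L4 : forall a b, prov T (imp (imp (imp a b) b) (imp (imp b a) a))
| p_mp : forall a b, prov T a -> prov T (imp a b) -> prov T b.

Inductive TQ : form -> Prop :=
| tq0 : forall n, (0 < n)%nat -> TQ (fequiv (q 0 n) bot)
| tq11 : TQ (fequiv (q 1 1) ftop)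
| tq1n : forall n, (2 <= n)%nat -> TQ (fequiv (q 1 n) (fpow (fneg (q 1 n)) (n - 1)))
| tqmn : forall m n, (m <= n)%nat -> (2 <= n)%nat ->
    TQ (fequiv (q m n) (fmul m (q 1 n))).

Inductive bconn : Type := Cprod | Cimp | Cosum | Cconj | Cdisj | Cequiv.

Definition bsyn (c : bconn) : form -> form -> form :=
  match c with
  | Cprod => fprod | Cimp => imp | Cosum => fosum
  | Cconj => fconj | Cdisj => fdisj | Cequiv => fequiv
  end.

Definition bsem (c : bconn) (x y : R) : R :=
  match c with
  | Cprod => Rmax 0 (x + y - 1)
  | Cimp => Rmin 1 (1 - x + y)
  | Cosum => Rmin 1 (x + y)
  | Cconj => Rmin x y
  | Cdisj => Rmax x y
  | Cequiv => 1 - Rabs (x - y)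
  end.

Definition fr (m n : nat) : R := INR m / INR n.

(* Main.v *)
Require Import Defs.
From Stdlib Require Import Reals Setoid Morphisms Lia Lra.
Open Scope R_scope.


Definition pr (a : form) : Prop := prov TQ a.
Definition le (a b : form) : Prop := pr (imp a b).
Definition eqv (a b : form) : Prop := le a b /\ le b a.

Lemma mp a b : pr a -> pr (imp a b) -> pr b.
Proof. intros H1 H2; exact (p_mp TQ a b H1 H2). Qed.
Lemma ax1 a b : pr (imp a (imp b a)). Proof. apply p_L1. Qed.
Lemma ax2 a b c : pr (imp (imp a b) (imp (imp b c) (imp a c))). Proof. apply p_L2. Qed.
Lemma ax3 a b : pr (imp (imp (fneg a) (fneg b)) (imp b a)). Proof. apply p_L3. Qed.
Lemma ax4 a b : pr (imp (imp (imp a b) b) (imp (imp b a) a)). Proof. apply p_L4. Qed.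

Lemma hs a b c : le a b -> le b c -> le a c.
Proof. unfold le; intros H1 H2. eapply mp; [exact H2|]. eapply mp; [exact H1|]. apply ax2. Qed.

Lemma weak a b : pr a -> le b a.
Proof. intros H. eapply mp; [exact H| apply ax1]. Qed.

Lemma tru_imp t b : pr t -> le (imp t b) b.
Proof.
  intros Ht. unfold le.
  assert (H1 : pr (imp (imp b t) t)).
  { eapply mp; [exact Ht | apply ax1]. }
  eapply mp; [exact H1 | apply ax4].
Qed.

Lemma le_refl a : le a a.
Proof.
  assert (Hk : pr (imp bot (imp bot bot))) by apply ax1.
  eapply hs; [apply ax1 with (b := imp bot (imp bot bot)) | apply tru_imp; exact Hk].
Qed.

Lemma suffix a b c : le a b -> le (imp b c) (imp a c).
Proof. intros H. eapply mp; [exact H | apply ax2]. Qed.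

Lemma assertion a b : le a (imp (imp a b) b).
Proof.
  eapply hs; [apply ax1 with (b := imp b a) | apply ax4].
Qed.

Lemma exch a b c : le (imp a (imp b c)) (imp b (imp a c)).
Proof.
  eapply hs; [apply ax2 with (b := imp b c) (c := c)|].
  apply suffix. apply assertion.
Qed.

Lemma exch_rule a b c : pr (imp a (imp b c)) -> pr (imp b (imp a c)).
Proof. intros H. eapply mp; [exact H | apply exch]. Qed.

Lemma prefix a b c : le a b -> le (imp c a) (imp c b).
Proof.
  intros H. unfold le. eapply mp; [exact H|]. apply exch_rule. apply ax2.
Qed.

Lemma mp_le a b : pr a -> le a b -> pr b.
Proof. intros H1 H2; exact (mp _ _ H1 H2). Qed.

Lemma ftop_pr : pr ftop. Proof. apply le_refl. Qed.

Lemma bot_le a : le bot a.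
Proof.
  unfold le. eapply mp; [|apply ax3].
  apply weak. apply le_refl.
Qed.

Lemma dneg1 a : le a (fneg (fneg a)).
Proof. apply assertion. Qed.
Lemma dneg2 a : le (fneg (fneg a)) a.
Proof.
  eapply hs; [apply ax4 |]. apply (tru_imp (imp bot a)). apply bot_le.
Qed.

Lemma eqv_refl a : eqv a a. Proof. split; apply le_refl. Qed.
Lemma eqv_sym a b : eqv a b -> eqv b a. Proof. intros [? ?]; split; auto. Qed.
Lemma eqv_trans a b c : eqv a b -> eqv b c -> eqv a c.
Proof. intros [? ?] [? ?]; split; eapply hs; eauto. Qed.

Global Instance eqv_Equiv : Equivalence eqv.
Proof. split; red; eauto using eqv_refl, eqv_sym, eqv_trans. Qed.
Global Instance le_Pre : PreOrder le.
Proof. split; red; eauto using le_refl, hs. Qed.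

Global Instance imp_proper : Proper (eqv ==> eqv ==> eqv) imp.
Proof.
  intros a a' [H1 H2] b b' [H3 H4]. split.
  - eapply hs; [apply suffix; exact H2 | apply prefix; exact H3].
  - eapply hs; [apply suffix; exact H1 | apply prefix; exact H4].
Qed.
Global Instance imp_le_proper : Proper (le --> le ==> le) imp.
Proof.
  intros a a' H1 b b' H3. unfold Basics.flip in H1.
  eapply hs; [apply suffix; exact H1 | apply prefix; exact H3].
Qed.
Global Instance le_proper : Proper (eqv ==> eqv ==> iff) le.
Proof.
  intros a a' [H1 H2] b b' [H3 H4]. split; intros H.
  - eapply hs; [exact H2|]. eapply hs; eauto.
  - eapply hs; [exact H1|]. eapply hs; eauto.
Qed.
Global Instance pr_proper : Proper (eqv ==> iff) pr.
Proof. intros a b [H1 H2]; split; intros; eapply mp_le; eauto. Qed.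
Global Instance pr_le_proper : Proper (le ==> Basics.impl) pr.
Proof. intros a b H1 H2. eapply mp_le; eauto. Qed.

Global Instance fneg_proper : Proper (eqv ==> eqv) fneg.
Proof. intros a b H. unfold fneg. rewrite H. reflexivity. Qed.
Global Instance fneg_le : Proper (le --> le) fneg.
Proof. intros a b H. unfold fneg. rewrite H. reflexivity. Qed.
Global Instance fprod_proper : Proper (eqv ==> eqv ==> eqv) fprod.
Proof. intros a b H c d H'. unfold fprod. rewrite H, H'. reflexivity. Qed.
Global Instance fosum_proper : Proper (eqv ==> eqv ==> eqv) fosum.
Proof. intros a b H c d H'. unfold fosum. rewrite H, H'. reflexivity. Qed.
Global Instance fprod_le : Proper (le ==> le ==> le) fprod.
Proof. intros a b H c d H'. unfold fprod. rewrite H, H'. reflexivity. Qed.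
Global Instance fosum_le : Proper (le ==> le ==> le) fosum.
Proof. intros a b H c d H'. unfold fosum. rewrite H, H'. reflexivity. Qed.
Global Instance fconj_proper : Proper (eqv ==> eqv ==> eqv) fconj.
Proof. intros a b H c d H'. unfold fconj. rewrite H, H'. reflexivity. Qed.
Global Instance fdisj_proper : Proper (eqv ==> eqv ==> eqv) fdisj.
Proof. intros a b H c d H'. unfold fdisj. rewrite H, H'. reflexivity. Qed.
Global Instance fequiv_proper : Proper (eqv ==> eqv ==> eqv) fequiv.
Proof. intros a b H c d H'. unfold fequiv. rewrite H, H'. reflexivity. Qed.
Global Instance fmul_proper k : Proper (eqv ==> eqv) (fmul k).
Proof. intros a b H. induction k as [|[|k] IH]; simpl; try reflexivity; auto.
  simpl in IH. rewrite H, IH. reflexivity. Qed.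
Global Instance fpow_proper : Proper (eqv ==> eq ==> eqv) fpow.
Proof. intros a b H k k' <-. induction k as [|[|k] IH]; simpl; try reflexivity; auto.
  simpl in IH. rewrite H, IH. reflexivity. Qed.

Lemma dneg a : eqv (fneg (fneg a)) a.
Proof. split; [apply dneg2 | apply dneg1]. Qed.

Lemma contra a b : eqv (imp a b) (imp (fneg b) (fneg a)).
Proof. split; [apply ax2 | apply ax3]. Qed.

Lemma pr_top a : pr a -> eqv a ftop.
Proof. intros H; split; apply weak; auto using ftop_pr. Qed.
Lemma top_pr a : eqv a ftop -> pr a.
Proof. intros H. rewrite H. apply ftop_pr. Qed.
Lemma top_imp a : eqv (imp ftop a) a.
Proof. split; [apply tru_imp, ftop_pr | apply ax1]. Qed.
Lemma le_top a b : le a b <-> eqv (imp a b) ftop.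
Proof. split; [apply pr_top | apply top_pr]. Qed.
Lemma le_antisym a b : le a b -> le b a -> eqv a b.
Proof. split; auto. Qed.
Lemma eqv_le a b : eqv a b -> le a b.
Proof. intros [? ?]; auto. Qed.

Close Scope R_scope.


Lemma exch_eqv a b c : eqv (imp a (imp b c)) (imp b (imp a c)).
Proof. split; apply exch. Qed.

Lemma imp_osum a b : eqv (imp a b) (fosum (fneg a) b).
Proof. unfold fosum. rewrite dneg. reflexivity. Qed.

Lemma osum_comm a b : eqv (fosum a b) (fosum b a).
Proof. unfold fosum. rewrite contra, dneg. reflexivity. Qed.

Lemma osum_assoc a b c : eqv (fosum a (fosum b c)) (fosum (fosum a b) c).
Proof.
  unfold fosum. rewrite (contra (fneg (imp (fneg a) b)) c), dneg.
  rewrite (exch_eqv (fneg c)). rewrite (contra (fneg c) b), dneg. reflexivity.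
Qed.

Lemma osum_bot_r a : eqv (fosum a bot) a. Proof. apply dneg. Qed.
Lemma osum_bot_l a : eqv (fosum bot a) a. Proof. apply top_imp. Qed.
Lemma osum_top a : eqv (fosum a ftop) ftop. Proof. apply pr_top, weak, ftop_pr. Qed.
Lemma osum_top_l a : eqv (fosum ftop a) ftop.
Proof. rewrite osum_comm. apply osum_top. Qed.
Lemma neg_osum a b : eqv (fneg (fosum a b)) (fprod (fneg a) (fneg b)).
Proof. unfold fprod, fosum. rewrite (dneg b). reflexivity. Qed.
Lemma neg_prod a b : eqv (fneg (fprod a b)) (fosum (fneg a) (fneg b)).
Proof. unfold fprod, fosum. rewrite !dneg. reflexivity. Qed.
Lemma prod_def a b : eqv (fprod a b) (fneg (fosum (fneg a) (fneg b))).
Proof. rewrite <- neg_prod, dneg. reflexivity. Qed.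
Lemma prod_comm a b : eqv (fprod a b) (fprod b a).
Proof. rewrite !prod_def, osum_comm. reflexivity. Qed.
Lemma prod_assoc a b c : eqv (fprod a (fprod b c)) (fprod (fprod a b) c).
Proof. rewrite !prod_def, !dneg, osum_assoc. reflexivity. Qed.
Lemma neg_top : eqv (fneg ftop) bot.
Proof. apply dneg. Qed.
Lemma prod_top a : eqv (fprod a ftop) a.
Proof. rewrite prod_def, neg_top, osum_bot_r, dneg. reflexivity. Qed.

Lemma le_contra a b : le a b <-> le (fneg b) (fneg a).
Proof. unfold le. rewrite contra. reflexivity. Qed.

Lemma le_osum a b : le a (fosum a b).
Proof. unfold le, fosum. apply exch_rule. apply prefix, bot_le. Qed.
Lemma le_osum_r a b : le b (fosum a b).
Proof. apply ax1. Qed.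
Lemma prod_le_l a b : le (fprod a b) a.
Proof. rewrite prod_def. rewrite <- (dneg a) at 2. apply le_contra. rewrite !dneg. apply le_osum. Qed.
Lemma prod_le_r a b : le (fprod a b) b.
Proof. rewrite prod_comm; apply prod_le_l. Qed.
Lemma prod_bot a : eqv (fprod bot a) bot.
Proof. split; [apply prod_le_l | apply bot_le]. Qed.

Lemma osum_neg_self a : eqv (fosum (fneg a) a) ftop.
Proof. apply pr_top. unfold fosum. apply dneg2. Qed.

Lemma le_imp_exch a b c : le a (imp b c) <-> le b (imp a c).
Proof. unfold le. rewrite exch_eqv. reflexivity. Qed.

Lemma resid a b c : le (fprod a b) c <-> le b (imp a c).
Proof.
  unfold fprod. rewrite le_contra, dneg.
  rewrite le_imp_exch. rewrite <- contra. apply le_imp_exch.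
Qed.

Lemma sub_resid c d e : le (fprod c (fneg d)) e <-> le c (fosum d e).
Proof. rewrite prod_comm, resid. reflexivity. Qed.

Lemma join_eq p q : eqv (fosum (fprod p (fneg q)) q) (imp (imp p q) q).
Proof. unfold fosum, fprod. rewrite dneg, dneg. reflexivity. Qed.
Lemma join_comm p q : eqv (imp (imp p q) q) (imp (imp q p) p).
Proof. split; apply ax4. Qed.
Lemma join_le p q : le p q -> eqv (imp (imp p q) q) q.
Proof. intros H. rewrite (pr_top _ H). apply top_imp. Qed.

Lemma le_bot_iff a b : le a b <-> eqv (fprod a (fneg b)) bot.
Proof.
  unfold fprod. rewrite dneg. split; intros H.
  - apply pr_top in H. rewrite H. apply neg_top.
  - apply top_pr. rewrite <- (dneg (imp a b)). rewrite H. reflexivity.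
Qed.

Definition meet x y := fprod x (imp x y).
Lemma meet_comm x y : eqv (meet x y) (meet y x).
Proof.
  unfold meet, fprod. apply fneg_proper.
  change (eqv (imp x (imp (imp x y) bot)) (imp y (imp (imp y x) bot))).
  rewrite (exch_eqv x), (exch_eqv y).
  change (eqv (imp (imp x y) (fneg x)) (imp (imp y x) (fneg y))).
  rewrite (contra x y), (contra y x). apply join_comm.
Qed.

Definition orth a b := le a (fneg b).
Global Instance orth_proper : Proper (eqv ==> eqv ==> iff) orth.
Proof. intros a a' H b b' H'. unfold orth. rewrite H, H'. reflexivity. Qed.

Lemma orth_sym a b : orth a b -> orth b a.
Proof. unfold orth; intros H. apply le_contra. rewrite dneg. exact H. Qed.

Lemma sub_cancel a b : orth a b -> eqv (fprod (fosum a b) (fneg b)) a.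
Proof.
  intros H. rewrite prod_comm. rewrite osum_comm.
  change (fosum b a) with (imp (fneg b) a).
  fold (meet (fneg b) a). rewrite meet_comm. unfold meet.
  rewrite (pr_top _ H). apply prod_top.
Qed.

Lemma EA a b c : orth a b -> orth (fosum a b) c -> orth a (fosum b c).
Proof.
  intros H1 H2. unfold orth in *. rewrite <- (sub_cancel a b H1).
  rewrite neg_osum. rewrite prod_comm. apply fprod_le; [reflexivity | exact H2].
Qed.

Lemma EA' x y z : orth y z -> orth x (fosum y z) -> orth (fosum x y) z.
Proof.
  intros H1 H2. apply orth_sym. rewrite osum_comm.
  apply EA; [apply orth_sym; exact H1 |]. rewrite osum_comm. apply orth_sym. exact H2.
Qed.


Lemma fmul_S k a : eqv (fmul (S k) a) (fosum a (fmul k a)).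
Proof. destruct k; simpl; [symmetry; apply osum_bot_r | reflexivity]. Qed.

Lemma fmul_add i j a : eqv (fmul (i + j) a) (fosum (fmul i a) (fmul j a)).
Proof.
  induction i as [|i IH]; simpl plus.
  - simpl. symmetry. apply osum_bot_l.
  - rewrite !fmul_S, IH. apply osum_assoc.
Qed.

Lemma fmul_mul i j a : eqv (fmul (i * j) a) (fmul i (fmul j a)).
Proof.
  induction i as [|i IH]; simpl mult.
  - reflexivity.
  - rewrite fmul_add, IH, fmul_S. reflexivity.
Qed.

Lemma fmul_mono i j a : (i <= j)%nat -> le (fmul i a) (fmul j a).
Proof.
  intros H. replace j with (i + (j - i))%nat by lia. rewrite fmul_add. apply le_osum.
Qed.

Lemma fpow_neg k a : eqv (fpow (fneg a) k) (fneg (fmul k a)).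
Proof.
  induction k as [|[|k] IH].
  - reflexivity.
  - reflexivity.
  - change (fpow (fneg a) (S (S k))) with (fprod (fneg a) (fpow (fneg a) (S k))).
    change (fmul (S (S k)) a) with (fosum a (fmul (S k) a)).
    rewrite IH, neg_osum. reflexivity.
Qed.

Lemma fmul_bot k : eqv (fmul k bot) bot.
Proof. induction k as [|k IH]; [reflexivity|]. rewrite fmul_S, IH. apply osum_bot_r. Qed.

Lemma fmul_top k : (1 <= k)%nat -> eqv (fmul k ftop) ftop.
Proof. intros H. destruct k; [lia|]. rewrite fmul_S. apply osum_top_l. Qed.

Lemma K_orth N e : (1 <= N)%nat -> eqv e (fneg (fmul (N-1) e)) ->
  forall i j, (i + j <= N)%nat -> orth (fmul i e) (fmul j e).
Proof.
  intros HN H.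
  assert (Hk : forall k, (k <= N - 1)%nat -> orth e (fmul k e)).
  { intros k Hk. unfold orth. rewrite H at 1. apply fneg_le. apply fmul_mono. exact Hk. }
  induction i as [|i IH]; intros j Hij.
  - unfold orth. simpl. apply bot_le.
  - rewrite fmul_S. apply EA'; [apply IH; lia|]. rewrite <- fmul_add. apply Hk. lia.
Qed.

Lemma K_top N e : (1 <= N)%nat -> eqv e (fneg (fmul (N-1) e)) -> eqv (fmul N e) ftop.
Proof.
  intros HN H. replace N with (S (N-1)) at 1 by lia. rewrite fmul_S.
  transitivity (fosum (fneg (fmul (N-1) e)) (fmul (N-1) e)).
  - apply fosum_proper; [exact H | reflexivity].
  - apply osum_neg_self.
Qed.

Lemma K_neg N e : (1 <= N)%nat -> eqv e (fneg (fmul (N-1) e)) ->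
  forall i, (i <= N)%nat -> eqv (fneg (fmul i e)) (fmul (N-i) e).
Proof.
  intros HN H i Hi. apply le_antisym.
  - assert (Ht := K_top N e HN H).
    replace N with (i + (N - i))%nat in Ht by lia. rewrite fmul_add in Ht.
    apply top_pr in Ht. exact Ht.
  - apply (K_orth N e HN H). lia.
Qed.

Lemma osum_swap4 a b c d : eqv (fosum (fosum a b) (fosum c d)) (fosum (fosum a c) (fosum b d)).
Proof.
  rewrite <- !osum_assoc. apply fosum_proper; [reflexivity|].
  rewrite !osum_assoc. rewrite (osum_comm b c). reflexivity.
Qed.

Lemma le_join p r : le p (fosum r (fprod p (fneg r))).
Proof. rewrite osum_comm, join_eq. apply assertion. Qed.

Lemma T3 p q r s : le (fprod (fosum p q) (fneg (fosum r s)))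
                      (fosum (fprod p (fneg r)) (fprod q (fneg s))).
Proof.
  apply sub_resid. rewrite osum_swap4. apply fosum_le; apply le_join.
Qed.

Lemma T3k k p q : le (fprod (fmul k p) (fneg (fmul k q))) (fmul k (fprod p (fneg q))).
Proof.
  induction k as [|k IH].
  - simpl. apply prod_le_l.
  - rewrite !fmul_S. eapply hs; [apply T3|]. apply fosum_le; [reflexivity|exact IH].
Qed.

Lemma I_lem x p : eqv (fosum (fosum x p) (fprod x p)) (fosum x p).
Proof.
  apply le_antisym; [| apply le_osum].
  set (w := fprod x p).
  set (r := fprod p (fneg w)).
  assert (Hp : eqv p (fosum r w)).
  { unfold r. rewrite join_eq, join_comm. symmetry. apply join_le. unfold w. apply prod_le_r. }
  assert (Hr : eqv r (meet (fneg x) p)).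
  { rewrite meet_comm. unfold r, meet, w. apply fprod_proper; [reflexivity|].
    unfold fprod. rewrite dneg. apply exch_eqv. }
  assert (Hxr : eqv (fosum x r) (fosum x p)).
  { rewrite Hr. unfold meet. change (imp (fneg x) p) with (fosum x p).
    rewrite osum_comm, prod_comm, join_eq, join_comm. apply join_le, le_osum. }
  rewrite <- Hxr at 1. rewrite <- osum_assoc, <- Hp. reflexivity.
Qed.

Lemma I'_lem x p : eqv (fprod (fprod x p) (fosum x p)) (fprod x p).
Proof.
  rewrite (prod_def (fprod x p)). rewrite (neg_prod x p), (neg_osum x p).
  rewrite I_lem. symmetry. apply prod_def.
Qed.

Lemma T1 x y : eqv (fprod (fprod x (fneg y)) (fneg (fprod y (fneg x)))) (fprod x (fneg y)).
Proof.
  rewrite (neg_prod y (fneg x)), (dneg x), osum_comm. apply I'_lem.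
Qed.

Lemma sub_iter k a b : eqv (fprod a (fneg b)) a -> eqv (fprod a (fneg (fmul k b))) a.
Proof.
  intros H. induction k as [|k IH].
  - simpl. apply prod_top.
  - rewrite fmul_S, neg_osum, prod_assoc, H. exact IH.
Qed.

Lemma U n x y : (1 <= n)%nat -> eqv x (fneg (fmul (n-1) x)) -> eqv y (fneg (fmul (n-1) y)) -> le x y.
Proof.
  intros Hn Hx Hy. apply le_bot_iff.
  assert (Hny : eqv (fneg y) (fmul (n-1) y)).
  { exact (K_neg n y Hn Hy 1 Hn). }
  assert (Ha : le (fprod x (fneg y)) (fmul (n-1) (fprod y (fneg x)))).
  { rewrite (fprod_proper _ _ Hx _ _ Hny). rewrite prod_comm. apply T3k. }
  apply le_bot_iff in Ha.
  rewrite <- Ha. symmetry. apply sub_iter. apply T1.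
Qed.

Lemma Ueq n x y : (1 <= n)%nat -> eqv x (fneg (fmul (n-1) x)) -> eqv y (fneg (fmul (n-1) y)) -> eqv x y.
Proof. intros; apply le_antisym; eapply U; eauto. Qed.


Lemma pr_prod_l a b : pr (fprod a b) -> pr a.
Proof. intros H. eapply mp_le; [exact H | apply prod_le_l]. Qed.
Lemma pr_prod_r a b : pr (fprod a b) -> pr b.
Proof. intros H. eapply mp_le; [exact H | apply prod_le_r]. Qed.

Lemma fequiv_eqv a b : pr (fequiv a b) -> eqv a b.
Proof. intros H. split; [eapply pr_prod_l | eapply pr_prod_r]; exact H. Qed.
Lemma eqv_fequiv a b : eqv a b -> pr (fequiv a b).
Proof.
  intros [H1 H2]. apply top_pr. unfold fequiv.
  rewrite (pr_top _ H1), (pr_top _ H2). apply prod_top.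
Qed.
Lemma ax_eqv a b : TQ (fequiv a b) -> eqv a b.
Proof. intros H. apply fequiv_eqv. apply p_ax. exact H. Qed.

Definition u n := q 1 n.

Lemma u_gen n : (1 <= n)%nat -> eqv (u n) (fneg (fmul (n-1) (u n))).
Proof.
  intros Hn. destruct (Nat.eq_dec n 1) as [->|Hn1].
  - simpl. apply ax_eqv. apply tq11.
  - rewrite <- fpow_neg. apply ax_eqv. apply tq1n. lia.
Qed.

Lemma qval m n : (1 <= n)%nat -> (m <= n)%nat -> eqv (q m n) (fmul m (u n)).
Proof.
  intros Hn Hm. destruct (Nat.eq_dec n 1) as [->|Hn1].
  - destruct m as [|[|m]]; [| reflexivity | lia].
    simpl. apply ax_eqv. apply tq0. lia.
  - apply ax_eqv. apply tqmn; lia.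
Qed.

Lemma u_div n d : (1 <= n)%nat -> (1 <= d)%nat -> eqv (u n) (fmul d (u (n*d))).
Proof.
  intros Hn Hd. set (N := (n*d)%nat).
  assert (HN : (1 <= N)%nat) by (unfold N; nia).
  apply (Ueq n); [exact Hn | apply u_gen; exact Hn |].
  rewrite <- fmul_mul. rewrite (K_neg N (u N) HN (u_gen N HN)); [| unfold N; nia].
  replace (N - (n - 1) * d)%nat with d by (unfold N; nia). reflexivity.
Qed.

Lemma qvalN m n d N : N = (n * d)%nat -> (1 <= n)%nat -> (1 <= d)%nat -> (m <= n)%nat ->
  eqv (q m n) (fmul (m * d) (u N)).
Proof.
  intros -> Hn Hd Hm. rewrite qval by lia. rewrite (u_div n d Hn Hd).
  rewrite fmul_mul. reflexivity.
Qed.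

Definition nimp N i j := Nat.min N (N - i + j).
Definition nprod N i j := (i + j - N)%nat.
Definition nosum N i j := Nat.min N (i + j).
Definition nconj N i j := nprod N i (nimp N i j).
Definition ndisj N i j := nconj N (nimp N (nimp N i j) j) (nimp N (nimp N j i) i).
Definition nequiv N i j := nprod N (nimp N i j) (nimp N j i).

Definition nsem N (c : bconn) : nat -> nat -> nat :=
  match c with
  | Cprod => nprod N | Cimp => nimp N | Cosum => nosum N
  | Cconj => nconj N | Cdisj => ndisj N | Cequiv => nequiv N
  end.

Lemma osum_S N e i j : (1 <= N)%nat -> eqv e (fneg (fmul (N-1) e)) ->
  eqv (fosum (fmul i e) (fmul j e)) (fmul (nosum N i j) e).
Proof.
  intros HN H. rewrite <- fmul_add. unfold nosum.
  destruct (Nat.le_gt_cases (i+j) N).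
  - rewrite Nat.min_r by lia. reflexivity.
  - rewrite Nat.min_l by lia. replace (i + j)%nat with (N + (i + j - N))%nat by lia.
    rewrite fmul_add, (K_top N e HN H), osum_top_l. reflexivity.
Qed.

Lemma imp_S N e i j : (1 <= N)%nat -> eqv e (fneg (fmul (N-1) e)) -> (i <= N)%nat ->
  eqv (imp (fmul i e) (fmul j e)) (fmul (nimp N i j) e).
Proof.
  intros HN H Hi. rewrite imp_osum, (K_neg N e HN H i Hi). rewrite (osum_S N e); auto.
  unfold nosum, nimp. reflexivity.
Qed.

Lemma prod_S N e i j : (1 <= N)%nat -> eqv e (fneg (fmul (N-1) e)) -> (i <= N)%nat -> (j <= N)%nat ->
  eqv (fprod (fmul i e) (fmul j e)) (fmul (nprod N i j) e).
Proof.
  intros HN H Hi Hj. unfold fprod. rewrite (K_neg N e HN H j Hj).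
  rewrite (imp_S N e); auto. rewrite (K_neg N e HN H); [| unfold nimp; lia].
  unfold nimp, nprod. replace (N - Nat.min N (N - i + (N - j)))%nat with (i + j - N)%nat by lia.
  reflexivity.
Qed.

Lemma nimp_le N i j : (nimp N i j <= N)%nat.
Proof. unfold nimp; lia. Qed.
Lemma nprod_le N i j : (i <= N)%nat -> (j <= N)%nat -> (nprod N i j <= N)%nat.
Proof. unfold nprod; lia. Qed.

Lemma bsyn_S N e c i j : (1 <= N)%nat -> eqv e (fneg (fmul (N-1) e)) -> (i <= N)%nat -> (j <= N)%nat ->
  eqv (bsyn c (fmul i e) (fmul j e)) (fmul (nsem N c i j) e).
Proof.
  intros HN H Hi Hj. destruct c; simpl.
  - apply prod_S; auto.
  - apply imp_S; auto.
  - apply osum_S; auto.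
  - unfold fconj, nconj. rewrite (imp_S N e); auto. apply prod_S; auto using nimp_le.
  - unfold fdisj, ndisj, fconj, nconj.
    rewrite (imp_S N e i j), (imp_S N e j i); auto.
    rewrite (imp_S N e _ j), (imp_S N e _ i); auto using nimp_le.
    rewrite (imp_S N e); auto using nimp_le. apply prod_S; auto using nimp_le.
  - unfold fequiv, nequiv. rewrite (imp_S N e i j), (imp_S N e j i); auto.
    apply prod_S; auto using nimp_le.
Qed.

Open Scope R_scope.


Definition ri x y := Rmin 1 (1 - x + y).
Definition rp x y := Rmax 0 (x + y - 1).

Ltac rcases := unfold ri, rp, Rmin, Rmax, Rabs in *;
  repeat match goal with
  | |- context [Rle_dec ?a ?b] => destruct (Rle_dec a b)
  | _ : context [Rle_dec ?a ?b] |- _ => destruct (Rle_dec a b)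
  | |- context [Rcase_abs ?a] => destruct (Rcase_abs a)
  end; lra.

Lemma ri_range x y : 0 <= x <= 1 -> 0 <= y <= 1 -> 0 <= ri x y <= 1.
Proof. intros; split; rcases. Qed.
Lemma conj_id x y : 0 <= x <= 1 -> 0 <= y <= 1 -> rp x (ri x y) = Rmin x y.
Proof. intros; rcases. Qed.
Lemma disj_id x y : 0 <= x <= 1 -> 0 <= y <= 1 ->
  Rmin (ri (ri x y) y) (ri (ri y x) x) = Rmax x y.
Proof. intros; rcases. Qed.
Lemma equiv_id x y : 0 <= x <= 1 -> 0 <= y <= 1 -> rp (ri x y) (ri y x) = 1 - Rabs (x - y).
Proof. intros; rcases. Qed.

Definition rr (N k : nat) : R := INR k / INR N.

Lemma INR_pos N : (1 <= N)%nat -> 0 < INR N.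
Proof. intros; apply lt_0_INR; lia. Qed.

Lemma rr_add N a b : rr N (a + b) = rr N a + rr N b.
Proof. unfold rr. rewrite plus_INR. unfold Rdiv; ring. Qed.

Lemma rr_N N : (1 <= N)%nat -> rr N N = 1.
Proof. intros H. unfold rr. field. apply not_0_INR. lia. Qed.

Lemma rr_sub N a b : (b <= a)%nat -> rr N (a - b) = rr N a - rr N b.
Proof. intros H. unfold rr. rewrite minus_INR by exact H. unfold Rdiv; ring. Qed.

Lemma rr_mono N a b : (1 <= N)%nat -> (a <= b)%nat -> rr N a <= rr N b.
Proof. intros HN H. unfold rr, Rdiv. apply Rmult_le_compat_r.
  - left. apply Rinv_0_lt_compat, INR_pos, HN.
  - apply le_INR, H. Qed.

Lemma rr_monot N a b : (1 <= N)%nat -> (a < b)%nat -> rr N a < rr N b.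
Proof. intros HN H. unfold rr, Rdiv. apply Rmult_lt_compat_r.
  - apply Rinv_0_lt_compat, INR_pos, HN.
  - apply lt_INR, H. Qed.

Lemma rr_0 N : rr N 0 = 0.
Proof. unfold rr. simpl. unfold Rdiv. ring. Qed.

Lemma rr_range N a : (1 <= N)%nat -> (a <= N)%nat -> 0 <= rr N a <= 1.
Proof. intros. rewrite <- (rr_N N) by auto. rewrite <- (rr_0 N). split; apply rr_mono; lia. Qed.

Lemma rr_min N a b : (1 <= N)%nat -> rr N (Nat.min a b) = Rmin (rr N a) (rr N b).
Proof.
  intros HN. destruct (Nat.le_ge_cases a b).
  - rewrite Nat.min_l by auto. rewrite Rmin_left; auto. apply rr_mono; auto.
  - rewrite Nat.min_r by auto. rewrite Rmin_right; auto. apply rr_mono; auto.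
Qed.

Lemma rr_trunc N a b : (1 <= N)%nat -> rr N (a - b) = Rmax 0 (rr N a - rr N b).
Proof.
  intros HN. destruct (Nat.le_ge_cases a b).
  - replace (a - b)%nat with 0%nat by lia. rewrite rr_0. rewrite Rmax_left; auto.
    assert (rr N a <= rr N b) by (apply rr_mono; auto). lra.
  - rewrite rr_sub by auto. rewrite Rmax_right; auto.
    assert (rr N b <= rr N a) by (apply rr_mono; auto). lra.
Qed.

Lemma rr_inj N a b : (1 <= N)%nat -> rr N a = rr N b -> a = b.
Proof.
  intros HN H. destruct (Nat.lt_total a b) as [h|[h|h]]; auto.
  - apply (rr_monot N) in h; auto. lra.
  - apply (rr_monot N) in h; auto. lra.
Qed.

Lemma rr_nimp N i j : (1 <= N)%nat -> (i <= N)%nat -> rr N (nimp N i j) = ri (rr N i) (rr N j).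
Proof.
  intros. unfold nimp, ri. rewrite rr_min, rr_N by auto.
  rewrite rr_add, rr_sub, rr_N by auto. reflexivity.
Qed.

Lemma rr_nprod N i j : (1 <= N)%nat -> rr N (nprod N i j) = rp (rr N i) (rr N j).
Proof. intros. unfold nprod, rp. rewrite rr_trunc, rr_add, rr_N by auto. reflexivity. Qed.

Lemma rr_nosum N i j : (1 <= N)%nat -> rr N (nosum N i j) = Rmin 1 (rr N i + rr N j).
Proof. intros. unfold nosum. rewrite rr_min, rr_add, rr_N by auto. reflexivity. Qed.

Lemma rr_nsem N c i j : (1 <= N)%nat -> (i <= N)%nat -> (j <= N)%nat ->
  rr N (nsem N c i j) = bsem c (rr N i) (rr N j).
Proof.
  intros HN Hi Hj.
  assert (Ri := rr_range N i HN Hi). assert (Rj := rr_range N j HN Hj).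
  destruct c; simpl.
  - apply rr_nprod; auto.
  - apply rr_nimp; auto.
  - apply rr_nosum; auto.
  - unfold nconj. rewrite rr_nprod, rr_nimp by auto. apply conj_id; auto.
  - unfold ndisj, nconj. rewrite rr_nprod by auto.
    rewrite (rr_nimp N (nimp N (nimp N i j) j)) by (auto using nimp_le).
    rewrite !rr_nimp by (auto using nimp_le).
    rewrite conj_id by (auto using ri_range).
    apply disj_id; auto.
  - unfold nequiv. rewrite rr_nprod, !rr_nimp by auto. apply equiv_id; auto.
Qed.


Global Instance bsyn_proper c : Proper (eqv ==> eqv ==> eqv) (bsyn c).
Proof. destruct c; simpl; typeclasses eauto. Qed.

Lemma fr_rr m n d N : N = (n * d)%nat -> (1 <= n)%nat -> (1 <= d)%nat -> fr m n = rr N (m * d).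
Proof.
  intros -> Hn Hd. unfold fr, rr. rewrite !mult_INR.
  assert (INR n <> 0) by (apply not_0_INR; lia).
  assert (INR d <> 0) by (apply not_0_INR; lia). field. auto.
Qed.

Theorem lemma3p4 :
  (forall (c : bconn) (m n k l p t : nat),
      (0 < n)%nat -> (m <= n)%nat ->
      (0 < l)%nat -> (k <= l)%nat ->
      (0 < t)%nat -> (p <= t)%nat ->
      bsem c (fr m n) (fr k l) = fr p t ->
      prov TQ (fequiv (bsyn c (q m n) (q k l)) (q p t)))
  /\
  (forall (m n p t : nat),
      (0 < n)%nat -> (m <= n)%nat ->
      (0 < t)%nat -> (p <= t)%nat ->
      1 - fr m n = fr p t ->
      prov TQ (fequiv (fneg (q m n)) (q p t)))
  /\
  (forall (m n m' n' : nat),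
      (0 < n)%nat -> (m <= n)%nat ->
      (0 < n')%nat -> (m' <= n')%nat ->
      fr m n = fr m' n' ->
      prov TQ (fequiv (q m n) (q m' n')))
  /\
  (forall (n : nat), (0 < n)%nat ->
      prov TQ (fequiv (q n n) ftop)).
Proof.
  split; [|split; [|split]].
  - intros c m n k l p t Hn Hm Hl Hk Ht Hp Hsem.
    set (N := (n * l * t)%nat).
    assert (HN : (1 <= N)%nat) by (unfold N; nia).
    assert (He := u_gen N HN).
    rewrite (fr_rr m n (l*t) N) in Hsem by (unfold N; lia || nia).
    rewrite (fr_rr k l (n*t) N) in Hsem by (unfold N; lia || nia).
    rewrite (fr_rr p t (n*l) N) in Hsem by (unfold N; lia || nia).
    rewrite <- rr_nsem in Hsem by (auto; unfold N; nia).
    apply rr_inj in Hsem; auto.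
    apply eqv_fequiv.
    rewrite (qvalN m n (l*t) N), (qvalN k l (n*t) N), (qvalN p t (n*l) N) by (unfold N; lia || nia).
    rewrite (bsyn_S N (u N)) by (auto; unfold N; nia).
    rewrite Hsem. reflexivity.
  - intros m n p t Hn Hm Ht Hp Hsem.
    set (N := (n * t)%nat).
    assert (HN : (1 <= N)%nat) by (unfold N; nia).
    assert (He := u_gen N HN).
    rewrite (fr_rr m n t N) in Hsem by (unfold N; lia || nia).
    rewrite (fr_rr p t n N) in Hsem by (unfold N; lia || nia).
    rewrite <- (rr_N N HN), <- rr_sub in Hsem by (unfold N; nia).
    apply rr_inj in Hsem; auto.
    apply eqv_fequiv.
    rewrite (qvalN m n t N), (qvalN p t n N) by (unfold N; lia || nia).
    rewrite (K_neg N (u N) HN He) by (unfold N; nia).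
    rewrite Hsem. reflexivity.
  - intros m n m' n' Hn Hm Hn' Hm' Hsem.
    set (N := (n * n')%nat).
    assert (HN : (1 <= N)%nat) by (unfold N; nia).
    rewrite (fr_rr m n n' N) in Hsem by (unfold N; lia || nia).
    rewrite (fr_rr m' n' n N) in Hsem by (unfold N; lia || nia).
    apply rr_inj in Hsem; auto.
    apply eqv_fequiv.
    rewrite (qvalN m n n' N), (qvalN m' n' n N) by (unfold N; lia || nia).
    rewrite Hsem. reflexivity.
  - intros n Hn. apply eqv_fequiv.
    rewrite (qval n n) by lia. apply K_top; [lia|]. apply u_gen. lia.
Qed.
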